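(* Let $a,b\in\mathbb{B}^2$ with $a\ne b$ and $|a|\ne|b|$. Put $$t=\frac{-(1-|a|^2)+\sqrt{(1-|a|^2)(1-|b|^2)}}{|a|^2-|b|^2},\qquad c=(1-t)a+tb.$$ Then $0<t<1$, $h_{\mathbb{B}^2}(a,c)=h_{\mathbb{B}^2}(c,b)$, and $\rho_{\mathbb{B}^2}(a,c)=\rho_{\mathbb{B}^2}(c,b)$.
   Context: $\mathbb{B}^2$ is the open unit disk in $\mathbb{C}$. The hyperbolic metric is given by $\operatorname{sh}\frac{\rho_{\mathbb{B}^2}(x,y)}{2}=\frac{|x-y|}{\sqrt{(1-|x|^2)(1-|y|^2)}}$. For distinct $x,y\in\mathbb{B}^2$ the Hilbert metric is $h_{\mathbb{B}^2}(x,y)=\log\frac{|u-y||x-v|}{|u-x||y-v|}$, where $u,v$ are the intersection points of the line through $x,y$ with the unit circle, labelled so that $|u-x|<|u-y|$. *)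

(* Defs.v *)
From Stdlib Require Import Reals.
From Coquelicot Require Import Coquelicot.
Open Scope R_scope.

Definition in_disk (x : C) : Prop := Cmod x < 1.

Definition rho_B2 (x y : C) : R :=
  2 * arcsinh (Cmod (Cminus x y) / sqrt ((1 - Cmod x ^ 2) * (1 - Cmod y ^ 2))).

(* The line through x, y is s |-> x + s (y - x).  It meets the
   unit circle where |x + s(y-x)|^2 = 1, i.e. A s^2 + 2 B s + K = 0 with
   A = |y-x|^2, B = <x, y-x>, K = |x|^2 - 1 (< 0 in the disk).  The two roots
   satisfy s_minus < 0 < 1 < s_plus; u (the endpoint with |u-x| < |u-y|)
   corresponds to s_minus and v to s_plus. *)
Definition dotC (p q : C) : R := fst p * fst q + snd p * snd q.

Definition hil_A (x y : C) : R := Cmod (Cminus y x) ^ 2.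
Definition hil_B (x y : C) : R := dotC x (Cminus y x).
Definition hil_K (x y : C) : R := Cmod x ^ 2 - 1.

Definition hil_sminus (x y : C) : R :=
  (- hil_B x y - sqrt (hil_B x y ^ 2 - hil_A x y * hil_K x y)) / hil_A x y.
Definition hil_splus (x y : C) : R :=
  (- hil_B x y + sqrt (hil_B x y ^ 2 - hil_A x y * hil_K x y)) / hil_A x y.

Definition hil_u (x y : C) : C := Cplus x (Cmult (RtoC (hil_sminus x y)) (Cminus y x)).
Definition hil_v (x y : C) : C := Cplus x (Cmult (RtoC (hil_splus x y)) (Cminus y x)).

Definition hilbert_B2 (x y : C) : R :=
  let u := hil_u x y in
  let v := hil_v x y in
  ln ((Cmod (Cminus u y) * Cmod (Cminus x v)) / (Cmod (Cminus u x) * Cmod (Cminus y v))).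

(* Main.v *)
Require Import Defs.
From Stdlib Require Import Reals Lra Psatz.
From Coquelicot Require Import Coquelicot.
Open Scope R_scope.

Lemma Cmod_sq (z : C) : Cmod z ^ 2 = fst z ^ 2 + snd z ^ 2.
Proof. unfold Cmod. rewrite pow2_sqrt; [reflexivity|nra]. Qed.

Lemma hil_formula (x y : C) :
  hil_A x y <> 0 -> hil_sminus x y <> 0 -> hil_splus x y - 1 <> 0 ->
  hilbert_B2 x y = ln (Rabs (hil_sminus x y - 1) * Rabs (hil_splus x y)
                       / (Rabs (hil_sminus x y) * Rabs (hil_splus x y - 1))).
Proof.
  intros HA H1 H2. unfold hilbert_B2, hil_u, hil_v.
  set (sm := hil_sminus x y). set (sp := hil_splus x y). fold sm in H1. fold sp in H2.
  assert (E1 : Cminus (Cplus x (Cmult (RtoC sm) (Cminus y x))) y = Cmult (RtoC (sm - 1)) (Cminus y x)).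
  { destruct x, y; unfold Cminus, Cplus, Cmult, Copp, RtoC; simpl; apply injective_projections; simpl; ring. }
  assert (E2 : Cminus x (Cplus x (Cmult (RtoC sp) (Cminus y x))) = Cmult (RtoC (- sp)) (Cminus y x)).
  { destruct x, y; unfold Cminus, Cplus, Cmult, Copp, RtoC; simpl; apply injective_projections; simpl; ring. }
  assert (E3 : Cminus (Cplus x (Cmult (RtoC sm) (Cminus y x))) x = Cmult (RtoC sm) (Cminus y x)).
  { destruct x, y; unfold Cminus, Cplus, Cmult, Copp, RtoC; simpl; apply injective_projections; simpl; ring. }
  assert (E4 : Cminus y (Cplus x (Cmult (RtoC sp) (Cminus y x))) = Cmult (RtoC (1 - sp)) (Cminus y x)).
  { destruct x, y; unfold Cminus, Cplus, Cmult, Copp, RtoC; simpl; apply injective_projections; simpl; ring. }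
  simpl. rewrite E1, E2, E3, E4, !Cmod_mult, !Cmod_R.
  rewrite Rabs_Ropp. replace (1 - sp) with (- (sp - 1)) by ring. rewrite Rabs_Ropp.
  assert (Hm : Cmod (Cminus y x) <> 0).
  { intro Hc. apply HA. unfold hil_A. rewrite Hc. ring. }
  assert (Ha1 : Rabs sm <> 0) by (apply Rabs_no_R0; auto).
  assert (Ha2 : Rabs (sp - 1) <> 0) by (apply Rabs_no_R0; auto).
  f_equal. field. auto.
Qed.

Lemma hilABK (a b x y : C) (r s : R) :
  fst x = fst a + r * (fst b - fst a) -> snd x = snd a + r * (snd b - snd a) ->
  fst y = fst a + s * (fst b - fst a) -> snd y = snd a + s * (snd b - snd a) ->
  hil_A x y = (s - r) ^ 2 * hil_A a b /\
  hil_B x y = (s - r) * (hil_B a b + r * hil_A a b) /\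
  hil_K x y = hil_K a b + 2 * r * hil_B a b + r ^ 2 * hil_A a b.
Proof.
  intros H1 H2 H3 H4. unfold hil_A, hil_B, hil_K, dotC. rewrite !Cmod_sq.
  destruct a as [a1 a2], b as [b1 b2], x as [x1 x2], y as [y1 y2].
  unfold Cminus, Cplus, Copp; simpl in *. subst. repeat split; ring.
Qed.

Lemma root_shift (A B K r s : R) : 0 < A -> r < s -> 0 <= B ^ 2 - A * K ->
  let A' := (s - r) ^ 2 * A in let B' := (s - r) * (B + r * A) in
  let K' := K + 2 * r * B + r ^ 2 * A in
  (- B' - sqrt (B' ^ 2 - A' * K')) / A' = ((- B - sqrt (B ^ 2 - A * K)) / A - r) / (s - r) /\
  (- B' + sqrt (B' ^ 2 - A' * K')) / A' = ((- B + sqrt (B ^ 2 - A * K)) / A - r) / (s - r).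
Proof.
  intros HA Hrs HD A' B' K'.
  replace (B' ^ 2 - A' * K') with ((s - r) ^ 2 * (B ^ 2 - A * K)) by (unfold A', B', K'; ring).
  rewrite sqrt_mult by nra. rewrite sqrt_pow2 by lra.
  unfold A', B'. split; field; lra.
Qed.

Lemma divneg (x y : R) : x < 0 -> 0 < y -> x / y < 0.
Proof. intros Hx Hy. unfold Rdiv. pose proof (Rinv_0_lt_compat y Hy). nra. Qed.

Theorem mainTheorem10 (a b : C) :
  in_disk a -> in_disk b -> a <> b -> Cmod a <> Cmod b ->
  let t := (- (1 - Cmod a ^ 2) + sqrt ((1 - Cmod a ^ 2) * (1 - Cmod b ^ 2)))
           / (Cmod a ^ 2 - Cmod b ^ 2) in
  let c := Cplus (Cmult (RtoC (1 - t)) a) (Cmult (RtoC t) b) in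
  0 < t < 1 /\ hilbert_B2 a c = hilbert_B2 c b /\ rho_B2 a c = rho_B2 c b.
Proof.
  intros Ha Hb Hab Hmab t c. unfold in_disk in Ha, Hb.
  pose proof (Cmod_ge_0 a) as Ha0. pose proof (Cmod_ge_0 b) as Hb0.
  set (sa := sqrt (1 - Cmod a ^ 2)). set (sb := sqrt (1 - Cmod b ^ 2)).
  assert (Hal : 0 < 1 - Cmod a ^ 2) by nra.
  assert (Hbl : 0 < 1 - Cmod b ^ 2) by nra.
  assert (Hsa : 0 < sa) by (apply sqrt_lt_R0; lra).
  assert (Hsb : 0 < sb) by (apply sqrt_lt_R0; lra).
  assert (Esa : sa ^ 2 = 1 - Cmod a ^ 2) by (apply pow2_sqrt; lra).
  assert (Esb : sb ^ 2 = 1 - Cmod b ^ 2) by (apply pow2_sqrt; lra).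
  assert (Hne : sa <> sb).
  { intro E. apply Hmab. assert (Cmod a ^ 2 = Cmod b ^ 2) by (rewrite <- E in Esb; lra). nra. }
  assert (Ht : t = sa / (sa + sb)).
  { unfold t. rewrite sqrt_mult by lra. fold sa sb. replace (Cmod a ^ 2 - Cmod b ^ 2) with (sb ^ 2 - sa ^ 2) by lra. rewrite <- Esa.
    assert (sb - sa <> 0) by lra. assert (sb + sa <> 0) by lra. replace (sb ^ 2 - sa ^ 2) with ((sb - sa) * (sb + sa)) by ring. field. split; lra. }
  clearbody t.
  assert (Ht01 : 0 < t < 1).
  { rewrite Ht. split.
    - apply Rdiv_lt_0_compat; lra.
    - apply (Rmult_lt_reg_r (sa + sb)); [lra|]. field_simplify; lra. }
  split; [exact Ht01|].
  set (A := hil_A a b). set (B := hil_B a b). set (K := hil_K a b).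
  assert (HA : 0 < A).
  { unfold A, hil_A. pose proof (Cmod_ge_0 (Cminus b a)).
    assert (Cmod (Cminus b a) <> 0).
    { intro E. apply Cmod_eq_0 in E. apply Hab. destruct a, b.
      unfold Cminus, Cplus, Copp in E. simpl in E. injection E; intros.
      f_equal; lra. }
    nra. }
  assert (HK : K = - sa ^ 2) by (unfold K, hil_K; lra).
  assert (HQ1 : A + 2 * B + K = - sb ^ 2).
  { unfold A, B, K, hil_A, hil_B, hil_K, dotC. rewrite Esb, !Cmod_sq.
    destruct a, b. unfold Cminus, Cplus, Copp; simpl. ring. }
  set (D := sqrt (B ^ 2 - A * K)).
  assert (HD0 : 0 <= B ^ 2 - A * K) by nra.
  assert (ED : D ^ 2 = B ^ 2 - A * K) by (apply pow2_sqrt; lra).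
  assert (HDp : 0 <= D) by apply sqrt_pos.
  set (p := hil_sminus a b). set (q := hil_splus a b).
  assert (Ep : p = (- B - D) / A) by reflexivity.
  assert (Eq : q = (- B + D) / A) by reflexivity.
  assert (Hp : p < 0).
  { rewrite Ep. assert (B + D > 0) by nra.
    apply (Rmult_lt_reg_r A); [lra|]. field_simplify; lra. }
  assert (Hq : 1 < q).
  { rewrite Eq. assert (D > A + B) by nra.
    apply (Rmult_lt_reg_r A); [lra|]. field_simplify; lra. }
  assert (Vpq : A * p * q = K).
  { rewrite Ep, Eq. field_simplify; [|lra]. rewrite ED. field. lra. }
  assert (Vsum : A * (p + q) = - 2 * B).
  { rewrite Ep, Eq. field. lra. }
  assert (Hc1 : fst c = fst a + t * (fst b - fst a)) by (unfold c; destruct a, b; simpl; ring).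
  assert (Hc2 : snd c = snd a + t * (snd b - snd a)) by (unfold c; destruct a, b; simpl; ring).
  assert (Ha1 : fst a = fst a + 0 * (fst b - fst a)) by ring.
  assert (Ha2 : snd a = snd a + 0 * (snd b - snd a)) by ring.
  assert (Hb1 : fst b = fst a + 1 * (fst b - fst a)) by ring.
  assert (Hb2 : snd b = snd a + 1 * (snd b - snd a)) by ring.
  destruct (hilABK a b a c 0 t Ha1 Ha2 Hc1 Hc2) as [A1 [B1 K1]].
  destruct (hilABK a b c b t 1 Hc1 Hc2 Hb1 Hb2) as [A2 [B2 K2]].
  destruct (root_shift A B K 0 t HA ltac:(lra) HD0) as [R1m R1p].
  destruct (root_shift A B K t 1 HA ltac:(lra) HD0) as [R2m R2p].
  fold D in R1m, R1p, R2m, R2p. rewrite <- Ep in R1m, R2m. rewrite <- Eq in R1p, R2p.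
  assert (Sm1 : hil_sminus a c = p / t).
  { unfold hil_sminus. rewrite A1, B1, K1. fold A B K. rewrite R1m. f_equal; ring. }
  assert (Sp1 : hil_splus a c = q / t).
  { unfold hil_splus. rewrite A1, B1, K1. fold A B K. rewrite R1p. f_equal; ring. }
  assert (Sm2 : hil_sminus c b = (p - t) / (1 - t)).
  { unfold hil_sminus. rewrite A2, B2, K2. fold A B K. rewrite R2m. reflexivity. }
  assert (Sp2 : hil_splus c b = (q - t) / (1 - t)).
  { unfold hil_splus. rewrite A2, B2, K2. fold A B K. rewrite R2p. reflexivity. }
  assert (HG : Cmod c ^ 2 - 1 = A * (t - p) * (t - q)).
  { change (Cmod c ^ 2 - 1) with (hil_K c b). rewrite K2. fold A B K.
    rewrite <- Vpq. replace (2 * t * B) with (- t * (- 2 * B)) by ring. rewrite <- Vsum. ring. }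
  split.
  - assert (Ht0 : t <> 0) by lra. assert (Ht1 : 1 - t <> 0) by lra.
    assert (G1 : hil_A a c <> 0) by (rewrite A1; fold A; apply Rgt_not_eq; apply Rmult_lt_0_compat; [apply pow_lt|]; lra).
    assert (G2 : hil_sminus a c <> 0) by (rewrite Sm1; unfold Rdiv; apply Rmult_integral_contrapositive; split; [lra|apply Rinv_neq_0_compat; lra]).
    assert (G3 : hil_splus a c - 1 <> 0).
    { rewrite Sp1. replace (q / t - 1) with ((q - t) / t) by (field; lra). apply Rgt_not_eq; apply Rdiv_lt_0_compat; lra. }
    assert (G4 : hil_A c b <> 0) by (rewrite A2; fold A; apply Rgt_not_eq; apply Rmult_lt_0_compat; [apply pow_lt|]; lra).
    assert (G5 : hil_sminus c b <> 0) by (rewrite Sm2; unfold Rdiv; apply Rmult_integral_contrapositive; split; [lra|apply Rinv_neq_0_compat; lra]).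
    assert (G6 : hil_splus c b - 1 <> 0).
    { rewrite Sp2. replace ((q - t) / (1 - t) - 1) with ((q - 1) / (1 - t)) by (field; lra). apply Rgt_not_eq; apply Rdiv_lt_0_compat; lra. }
    rewrite (hil_formula a c G1 G2 G3), (hil_formula c b G4 G5 G6).
    rewrite Sm1, Sp1, Sm2, Sp2. f_equal.
    assert (Q1 : p / t - 1 < 0) by (replace (p / t - 1) with ((p - t) / t) by (field; lra); apply divneg; lra).
    assert (Q2 : 0 < q / t) by (apply Rdiv_lt_0_compat; lra).
    assert (Q3 : p / t < 0) by (apply divneg; lra).
    assert (Q4 : 0 < q / t - 1) by (replace (q / t - 1) with ((q - t) / t) by (field; lra); apply Rdiv_lt_0_compat; lra).
    assert (Q5 : (p - t) / (1 - t) - 1 < 0) by (replace ((p - t) / (1 - t) - 1) with ((p - 1) / (1 - t)) by (field; lra); apply divneg; lra).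
    assert (Q6 : 0 < (q - t) / (1 - t)) by (apply Rdiv_lt_0_compat; lra).
    assert (Q7 : (p - t) / (1 - t) < 0) by (apply divneg; lra).
    assert (Q8 : 0 < (q - t) / (1 - t) - 1) by (replace ((q - t) / (1 - t) - 1) with ((q - 1) / (1 - t)) by (field; lra); apply Rdiv_lt_0_compat; lra).
    rewrite (Rabs_left _ Q1), (Rabs_left _ Q3), (Rabs_left _ Q5), (Rabs_left _ Q7).
    rewrite (Rabs_pos_eq _ (Rlt_le _ _ Q2)), (Rabs_pos_eq _ (Rlt_le _ _ Q4)),
            (Rabs_pos_eq _ (Rlt_le _ _ Q6)), (Rabs_pos_eq _ (Rlt_le _ _ Q8)).
    replace (- (p / t - 1) * (q / t) / (- (p / t) * (q / t - 1)))
      with ((t - p) * q / ((- p) * (q - t))) by (field; repeat split; lra).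
    replace (- ((p - t) / (1 - t) - 1) * ((q - t) / (1 - t)) / (- ((p - t) / (1 - t)) * ((q - t) / (1 - t) - 1)))
      with ((1 - p) * (q - t) / ((t - p) * (q - 1))) by (field; repeat split; lra).
    assert (Fa : sa ^ 2 = - (A * p * q)) by lra.
    assert (Fb : sb ^ 2 = A * (1 - p) * (q - 1)).
    { replace (A * (1 - p) * (q - 1)) with (- (A + (- (A * (p + q))) + A * p * q)) by ring.
      rewrite Vsum, Vpq. lra. }
    assert (Cross : (t - p) * q * ((t - p) * (q - 1)) = (1 - p) * (q - t) * ((- p) * (q - t))).
    { apply Rminus_diag_uniq. rewrite Ht.
      replace ((sa / (sa + sb) - p) * q * ((sa / (sa + sb) - p) * (q - 1)) -
               (1 - p) * (q - sa / (sa + sb)) * (- p * (q - sa / (sa + sb))))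
        with (((1 - p) * (q - 1) * (q - p) * (sa ^ 2 + A * p * q)
               + p * q * (q - p) * (sb ^ 2 - A * (1 - p) * (q - 1))) / (sa + sb) ^ 2)
        by (field; lra).
      rewrite Fa, Fb. field. lra. }
    replace ((t - p) * q / (- p * (q - t))) with ((t - p) * q * ((t - p) * (q - 1)) / ((- p * (q - t)) * ((t - p) * (q - 1)))) by (field; repeat split; lra).
    replace ((1 - p) * (q - t) / ((t - p) * (q - 1))) with ((1 - p) * (q - t) * ((- p) * (q - t)) / ((- p * (q - t)) * ((t - p) * (q - 1)))) by (field; repeat split; lra).
    rewrite Cross. reflexivity.
  - unfold rho_B2. f_equal. f_equal.
    assert (E1 : Cminus a c = Cmult (RtoC (- t)) (Cminus b a)).
    { unfold c. destruct a, b; unfold Cminus, Cplus, Cmult, Copp, RtoC; simpl; apply injective_projections; simpl; ring. }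
    assert (E2 : Cminus c b = Cmult (RtoC (- (1 - t))) (Cminus b a)).
    { unfold c. destruct a, b; unfold Cminus, Cplus, Cmult, Copp, RtoC; simpl; apply injective_projections; simpl; ring. }
    rewrite E1, E2, !Cmod_mult, !Cmod_R, !Rabs_Ropp.
    rewrite (Rabs_pos_eq t) by lra. rewrite (Rabs_pos_eq (1 - t)) by lra.
    assert (Hg : 0 < 1 - Cmod c ^ 2).
    { replace (1 - Cmod c ^ 2) with (- (A * (t - p) * (t - q))) by lra.
      assert (0 < A * (t - p) * (q - t)).
      { apply Rmult_lt_0_compat; [apply Rmult_lt_0_compat|]; lra. }
      lra. }
    rewrite !sqrt_mult by lra. fold sa sb.
    assert (0 < sqrt (1 - Cmod c ^ 2)) by (apply sqrt_lt_R0; lra).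
    rewrite Ht. field. repeat split; lra.
Qed.
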